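(* Suppose $K\in\mathbb{K}$ and let $K'=K-2\eta\,(R+B^T\mathcal{E}(P^K)B)^{-1}L^K$, i.e. $K_i'=K_i-2\eta(R_i+B_i^T\mathcal{E}_i(P^K)B_i)^{-1}L_i^K$ for each $i$. If $0<\eta\le\frac12$, then $K'\in\mathbb{K}$.
   Context: Let $N_s\ge 1$, $\Omega=\{1,\dots,N_s\}$; tuples $V=(V_1,\dots,V_{N_s})$ of matrices are combined componentwise. Markovian jump linear system: $x_{t+1}=A_{\omega(t)}x_t+B_{\omega(t)}u_t$, $A_i\in\mathbb{R}^{d\times d}$, $B_i\in\mathbb{R}^{d\times k}$; $\{\omega(t)\}$ is a time-homogeneous Markov chain on $\Omega$ with transition probabilities $p_{ij}$ and initial distribution $\pi$ with $\pi_i>0$; $x_0$ is random, independent of the chain, with $\mathbb{E}[x_0x_0^T]\succ0$. The system is mean-square stabilizable. $Q=(Q_i)\succ0$, $R=(R_i)\succ0$. For $K=(K_i)$, $K_i\in\mathbb{R}^{k\times d}$, $u_t=-K_{\omega(t)}x_t$ and $C(K)=\mathbb{E}[\sum_{t\ge0}x_t^TQ_{\omega(t)}x_t+u_t^TR_{\omega(t)}u_t]$. $\mathbb{K}$ is the set of $K$ making the closed loop $x_{t+1}=(A_{\omega(t)}-B_{\omega(t)}K_{\omega(t)})x_t$ mean-square stable ($\mathbb{E}[x_tx_t^T]\to0$ for all initial conditions). $\mathcal{E}_i(V)=\sum_jp_{ij}V_j$. For $K\in\mathbb{K}$, $P^K$ is the unique solution of $P_i^K=Q_i+K_i^TR_iK_i+(A_i-B_iK_i)^T\mathcal{E}_i(P^K)(A_i-B_iK_i)$,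 and $L_i^K=(R_i+B_i^T\mathcal{E}_i(P^K)B_i)K_i-B_i^T\mathcal{E}_i(P^K)A_i$. *)

(* Defs.v *)
From HB Require Import structures.
From mathcomp Require Import all_boot all_order all_algebra.
From mathcomp Require Import all_classical all_reals all_analysis.
Set Implicit Arguments. Unset Strict Implicit. Unset Printing Implicit Defensive.
Import Order.TTheory GRing.Theory Num.Theory.
Import numFieldNormedType.Exports.
Local Open Scope classical_set_scope.
Local Open Scope ring_scope.

Section MJLS.
Variable R : realType.
Variables (N d k : nat).

(* transition matrix p : p i j = P(omega(t+1)=j | omega(t)=i) *)
Definition stochastic (p : 'M[R]_N) : Prop :=
  (forall i j, 0 <= p i j) /\ (forall i, \sum_j p i j = 1).

Definition prob_vector (pi : 'I_N -> R) : Prop :=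
  (forall i, 0 <= pi i) /\ \sum_i pi i = 1.

Definition posdef n (M : 'M[R]_n) : Prop :=
  M^T = M /\ forall x : 'cV[R]_n, x != 0 -> 0 < (x^T *m M *m x) 0 0.

Definition Eop (p : 'M[R]_N) (V : 'I_N -> 'M[R]_d) (i : 'I_N) : 'M[R]_d :=
  \sum_j p i j *: V j.

(* probability of the first states omega(0),...,omega(t-1) being the seq s *)
Fixpoint chainprob (p : 'M[R]_N) (i : 'I_N) (s : seq 'I_N) : R :=
  match s with [::] => 1 | j :: s' => p i j * chainprob p j s' end.
Definition pathprob (pi : 'I_N -> R) (p : 'M[R]_N) (s : seq 'I_N) : R :=
  match s with [::] => 1 | i :: s' => pi i * chainprob p i s' end.

(* state after following modes s from x : x_{t} = M_{w(t-1)} ... M_{w(0)} x *)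
Fixpoint traj (M : 'I_N -> 'M[R]_d) (s : seq 'I_N) (x : 'cV[R]_d) : 'cV[R]_d :=
  match s with [::] => x | i :: s' => traj M s' (M i *m x) end.

(* E[x_t x_t^T] for x_{t+1} = M_{omega(t)} x_t, omega a Markov chain with
   initial distribution pi and transition matrix p, x_0 = x0 *)
Definition second_moment (pi : 'I_N -> R) (p : 'M[R]_N) (M : 'I_N -> 'M[R]_d)
  (x0 : 'cV[R]_d) (t : nat) : 'M[R]_d :=
  \sum_(w : t.-tuple 'I_N) pathprob pi p w *: (traj M w x0 *m (traj M w x0)^T).

Definition closed_loop (A : 'I_N -> 'M[R]_d) (B : 'I_N -> 'M[R]_(d, k))
  (K : 'I_N -> 'M[R]_(k, d)) (i : 'I_N) : 'M[R]_d := A i - B i *m K i.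

(* K in the set 𝕂: closed loop mean-square stable, i.e. E[x_t x_t^T] -> 0
   for all initial conditions (initial state x0, initial mode distribution) *)
Definition ms_stabilizing (p : 'M[R]_N) (A : 'I_N -> 'M[R]_d)
  (B : 'I_N -> 'M[R]_(d, k)) (K : 'I_N -> 'M[R]_(k, d)) : Prop :=
  forall (pi : 'I_N -> R) (x0 : 'cV[R]_d), prob_vector pi ->
    forall a b : 'I_d,
      (fun t : nat => second_moment pi p (closed_loop A B K) x0 t a b) @ \oo --> (0 : R).

Definition is_PK (p : 'M[R]_N) (A : 'I_N -> 'M[R]_d) (B : 'I_N -> 'M[R]_(d, k))
  (Q : 'I_N -> 'M[R]_d) (Rc : 'I_N -> 'M[R]_k) (K : 'I_N -> 'M[R]_(k, d))
  (P : 'I_N -> 'M[R]_d) : Prop :=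
  forall i, P i = Q i + (K i)^T *m Rc i *m K i
                  + (closed_loop A B K i)^T *m Eop p P i *m closed_loop A B K i.

Definition LK (p : 'M[R]_N) (A : 'I_N -> 'M[R]_d) (B : 'I_N -> 'M[R]_(d, k))
  (Rc : 'I_N -> 'M[R]_k) (K : 'I_N -> 'M[R]_(k, d)) (P : 'I_N -> 'M[R]_d)
  (i : 'I_N) : 'M[R]_(k, d) :=
  (Rc i + (B i)^T *m Eop p P i *m B i) *m K i - (B i)^T *m Eop p P i *m A i.

Definition Kupdate (eta : R) (p : 'M[R]_N) (A : 'I_N -> 'M[R]_d)
  (B : 'I_N -> 'M[R]_(d, k)) (Rc : 'I_N -> 'M[R]_k) (K : 'I_N -> 'M[R]_(k, d))
  (P : 'I_N -> 'M[R]_d) (i : 'I_N) : 'M[R]_(k, d) :=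
  K i - (2 * eta) *: (invmx (Rc i + (B i)^T *m Eop p P i *m B i) *m LK p A B Rc K P i).

End MJLS.

(* Main.v *)
Require Import Defs.
From HB Require Import structures.
From mathcomp Require Import all_boot all_order all_algebra.
From mathcomp Require Import all_classical all_reals all_analysis.
From mathcomp Require Import lra.
Import Order.TTheory GRing.Theory Num.Theory.
Import numFieldNormedType.Exports.
Local Open Scope classical_set_scope.
Local Open Scope ring_scope.
Set Implicit Arguments. Unset Strict Implicit. Unset Printing Implicit Defensive.
Set Implicit Arguments. Unset Strict Implicit. Unset Printing Implicit Defensive.
Section Conv.
Variable R : realType.

Lemma summable_cvg0 (u : R ^nat) (B : R) : (forall n, 0 <= u n) ->
  (forall n, \sum_(t < n) u t <= B) -> u @ \oo --> 0.
Proof.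
move=> u0 uB; apply: cvg_series_cvg_0; apply: nondecreasing_is_cvgn.
  rewrite seriesEnat /=.
  have := @nondecreasing_series _ u predT 0%N (fun n _ _ => u0 n).
  by [].
exists B => _ [n _ <-]; rewrite seriesEord /=; exact: uB.
Qed.

Lemma cvg_sum0 (I : Type) (r : seq I) (u : I -> nat -> R) :
  (forall i, u i @ \oo --> 0) -> (fun n => \sum_(i <- r) u i n) @ \oo --> 0.
Proof.
move=> H; elim: r => [|i r IH].
  have -> : (fun n => \sum_(i <- [::]) u i n) = (fun _ => 0) by apply/funext => n; rewrite big_nil.
  exact: cvg_cst.
have -> : (fun n => \sum_(j <- i :: r) u j n) = (fun n => u i n + \sum_(j <- r) u j n).
  by apply/funext => n; rewrite big_cons.
have := cvgD (H i) IH; rewrite addr0; exact.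
Qed.

Lemma cvg_scale0 (u : nat -> R) (c : R) : u @ \oo --> 0 -> (fun n => c * u n) @ \oo --> 0.
Proof. by move=> H; rewrite -(mulr0 c); apply: cvgMl_tmp. Qed.

Lemma squeeze0 (f g : nat -> R) : (forall n, `|f n| <= g n) -> g @ \oo --> 0 -> f @ \oo --> 0.
Proof.
move=> fg g0; apply: (@squeeze_cvgr _ _ _ _ (fun n => - g n) g).
  by near=> n; rewrite -ler_norml fg.
  by rewrite -oppr0; apply: cvgN.
done.
Unshelve. all: by end_near.
Qed.

Lemma cst_cvg0 (c : R) : (fun _ : nat => c) @ \oo --> 0 -> c = 0.
Proof. move=> H. have := cvg_lim (@Rhausdorff R) H. move=> /(_ _) h. by move: h; rewrite lim_cst.
 Qed.

End Conv.
Lemma sum_tuple_cons (T : finType) (V : nmodType) n (F : seq T -> V) :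
  \sum_(w : n.+1.-tuple T) F w = \sum_(i : T) \sum_(w : n.-tuple T) F (i :: w).
Proof.
rewrite pair_big /=.
rewrite (reindex (fun q : T * n.-tuple T => [tuple of q.1 :: q.2])) /=.
  by apply: eq_bigr => -[i w].
exists (fun w : n.+1.-tuple T => (thead w, [tuple of behead w])).
  by move=> [i w] _ /=; congr (_, _); apply: val_inj.
by move=> w _; apply: val_inj => /=; case: w => -[|a s] //=.
Qed.
Section Alg.
Variable R : realType.

Definition dot n (u v : 'cV[R]_n) : R := (u^T *m v) 0 0.
Definition bf n (x : 'cV[R]_n) (X : 'M[R]_n) (z : 'cV[R]_n) : R := dot x (X *m z).

Lemma dotE n (u v : 'cV[R]_n) : dot u v = \sum_a u a 0 * v a 0.
Proof. by rewrite /dot mxE; apply: eq_bigr => a _; rewrite mxE. Qed.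

Lemma dotC n (u v : 'cV[R]_n) : dot u v = dot v u.
Proof. by rewrite !dotE; apply: eq_bigr => a _; rewrite mulrC. Qed.

Lemma dotDl n (u v w : 'cV[R]_n) : dot (u + v) w = dot u w + dot v w.
Proof. by rewrite /dot linearD /= mulmxDl mxE. Qed.
Lemma dotDr n (u v w : 'cV[R]_n) : dot w (u + v) = dot w u + dot w v.
Proof. by rewrite /dot mulmxDr mxE. Qed.
Lemma dotZl n a (u w : 'cV[R]_n) : dot (a *: u) w = a * dot u w.
Proof. by rewrite /dot linearZ /= -scalemxAl mxE. Qed.
Lemma dotZr n a (u w : 'cV[R]_n) : dot w (a *: u) = a * dot w u.
Proof. by rewrite /dot -scalemxAr mxE. Qed.
Lemma dotNl n (u w : 'cV[R]_n) : dot (- u) w = - dot u w.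
Proof. by rewrite -scaleN1r dotZl mulN1r. Qed.
Lemma dotNr n (u w : 'cV[R]_n) : dot w (- u) = - dot w u.
Proof. by rewrite -scaleN1r dotZr mulN1r. Qed.
Lemma dotBl n (u v w : 'cV[R]_n) : dot (u - v) w = dot u w - dot v w.
Proof. by rewrite dotDl dotNl. Qed.
Lemma dotBr n (u v w : 'cV[R]_n) : dot w (u - v) = dot w u - dot w v.
Proof. by rewrite dotDr dotNr. Qed.
Lemma dot_tr m n (X : 'M[R]_(m, n)) (u : 'cV[R]_m) (v : 'cV[R]_n) :
  dot u (X *m v) = dot (X^T *m u) v.
Proof. by rewrite /dot trmx_mul trmxK mulmxA. Qed.
Lemma dot0l n (w : 'cV[R]_n) : dot 0 w = 0.
Proof. by rewrite /dot trmx0 mul0mx mxE. Qed.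

Lemma bfD n x (X Y : 'M[R]_n) z : bf x (X + Y) z = bf x X z + bf x Y z.
Proof. by rewrite /bf mulmxDl dotDr. Qed.
Lemma bfZ n x a (X : 'M[R]_n) z : bf x (a *: X) z = a * bf x X z.
Proof. by rewrite /bf -scalemxAl dotZr. Qed.
Lemma bf0 n x (z : 'cV[R]_n) : bf x 0 z = 0.
Proof. by rewrite /bf mul0mx /dot mulmx0 mxE. Qed.
Lemma bf_sum n x z (I : finType) (F : I -> 'M[R]_n) :
  bf x (\sum_i F i) z = \sum_i bf x (F i) z.
Proof. by apply: (big_morph (fun X => bf x X z)) => [X Y|]; rewrite ?bfD ?bf0. Qed.
Lemma bf_mul n m x (A : 'M[R]_(n, m)) (X : 'M[R]_n) (B : 'M[R]_(n, m)) z :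
  bf x (A^T *m X *m B) z = bf (A *m x) X (B *m z).
Proof. by rewrite /bf -!mulmxA dot_tr trmxK. Qed.
Lemma bf_sym n (X : 'M[R]_n) x z : X^T = X -> bf x X z = bf z X x.
Proof. by move=> HX; rewrite /bf dot_tr HX dotC. Qed.
Lemma bf_entry n (X : 'M[R]_n) a b : bf (delta_mx a 0) X (delta_mx b 0) = X a b.
Proof.
rewrite /bf dotE (bigD1 a) //= big1 => [|c /negbTE ca]; last by rewrite mxE ca mul0r.
rewrite addr0 mxE !eqxx mul1r mxE (bigD1 b) //= big1 => [|c /negbTE cb]; last by rewrite mxE cb mulr0.
by rewrite addr0 mxE !eqxx mulr1.
Qed.

Variables (N : nat) (p : 'M[R]_N).

Lemma bfE d x (V : 'I_N -> 'M[R]_d) i z : bf x (Eop p V i) z = \sum_j p i j * bf x (V j) z.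
Proof. by rewrite /Eop bf_sum; apply: eq_bigr => j _; rewrite bfZ. Qed.

Definition Lop d (M : 'I_N -> 'M[R]_d) (V : 'I_N -> 'M[R]_d) (i : 'I_N) : 'M[R]_d :=
  (M i)^T *m Eop p V i *m M i.

Lemma bfL d M (V : 'I_N -> 'M[R]_d) i x z :
  bf x (Lop M V i) z = bf (M i *m x) (Eop p V i) (M i *m z).
Proof. exact: bf_mul. Qed.

Lemma bfL' d M (V : 'I_N -> 'M[R]_d) i x z :
  bf x (Lop M V i) z = \sum_j p i j * bf (M i *m x) (V j) (M i *m z).
Proof. by rewrite bfL bfE. Qed.

Lemma bfEL d M (V : 'I_N -> 'M[R]_d) i y w :
  bf y (Eop p (Lop M V) i) w = \sum_j p i j * bf (M j *m y) (Eop p V j) (M j *m w).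
Proof. by rewrite bfE; apply: eq_bigr => j _; rewrite bfL. Qed.

End Alg.
Section Main.
Variable R : realType.
Variables (N d : nat).
Variable p : 'M[R]_N.

Fixpoint Mom (M : 'I_N -> 'M[R]_d) (t : nat) (i : 'I_N) (y : 'cV[R]_d) : 'M[R]_d :=
  match t with
  | 0 => y *m y^T
  | t'.+1 => \sum_j p i j *: Mom M t' j (M j *m y)
  end.

Lemma MomE M t i y :
  \sum_(w : t.-tuple 'I_N) chainprob p i w *: (traj M w y *m (traj M w y)^T) = Mom M t i y.
Proof.
elim: t i y => [|t IH] i y /=.
  by rewrite (big_pred1 [tuple]) ?scale1r // => w; rewrite /= [w]tuple0; apply/eqP.
rewrite (@sum_tuple_cons _ _ _ (fun w => chainprob p i w *: (traj M w y *m (traj M w y)^T))); apply: eq_bigr => j _ /=.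
by rewrite -IH scaler_sumr; apply: eq_bigr => w _; rewrite scalerA.
Qed.

Lemma smE pi M x0 t :
  second_moment pi p M x0 t.+1 = \sum_i pi i *: Mom M t i (M i *m x0).
Proof.
rewrite /second_moment (@sum_tuple_cons _ _ _ (fun w => pathprob pi p w *: (traj M w x0 *m (traj M w x0)^T))); apply: eq_bigr => i _ /=.
by rewrite -MomE scaler_sumr; apply: eq_bigr => w _; rewrite scalerA.
Qed.
End Main.
Section Bounds.
Variable R : realType.
Variables (N d : nat).
Variable p : 'M[R]_N.
Hypothesis hp : stochastic p.

Lemma p_ge0 i j : 0 <= p i j. Proof. by case: hp. Qed.
Lemma p_sum1 i : \sum_j p i j = 1. Proof. by case: hp. Qed.

Lemma bf_expand (y w : 'cV[R]_d) X :
  bf y X w = \sum_a \sum_b (y a 0 * X a b * w b 0).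
Proof.
rewrite /bf dotE; apply: eq_bigr => a _; rewrite mxE big_distrr /=.
by apply: eq_bigr => b _; rewrite mulrA.
Qed.

Lemma tr_yy (y : 'cV[R]_d) : \tr (y *m y^T) = \sum_a y a 0 ^+ 2.
Proof. by rewrite /mxtrace; apply: eq_bigr => a _; rewrite mxE big_ord1 mxE expr2. Qed.

Lemma sq_le_tr (y : 'cV[R]_d) a : y a 0 ^+ 2 <= \tr (y *m y^T).
Proof.
rewrite tr_yy (bigD1 a) //= lerDl; apply: sumr_ge0 => b _; exact: sqr_ge0.
Qed.

Lemma tr_Mom_ge0 M t i (y : 'cV[R]_d) : 0 <= \tr (Mom p M t i y).
Proof.
elim: t i y => [|t IH] i y /=.
  by rewrite tr_yy; apply: sumr_ge0 => b _; exact: sqr_ge0.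
rewrite raddf_sum /=; apply: sumr_ge0 => j _; rewrite mxtraceZ.
by apply: mulr_ge0; [exact: p_ge0 | exact: IH].
Qed.

Definition bndc (V : 'I_N -> 'M[R]_d) : R := \sum_j \sum_a \sum_b `|V j a b|.

Lemma base_old (V : 'I_N -> 'M[R]_d) i (y w : 'cV[R]_d) :
  `|bf y (Eop p V i) w| <= bndc V * (\tr (y *m y^T) + \tr (w *m w^T)).
Proof.
set T := \tr (y *m y^T) + \tr (w *m w^T).
have T0 : 0 <= T by rewrite addr_ge0 // tr_yy; apply: sumr_ge0 => b _; exact: sqr_ge0.
rewrite bf_expand (le_trans (ler_norm_sum _ _ _)) //.
have -> : bndc V * T = \sum_a \sum_b ((\sum_j `|V j a b|) * T).
  rewrite /bndc exchange_big /= mulr_suml; apply: eq_bigr => a _.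
  by rewrite exchange_big /= mulr_suml.
apply: ler_sum => a _; rewrite (le_trans (ler_norm_sum _ _ _)) //.
apply: ler_sum => b _.
have hyw : `|y a 0| * `|w b 0| <= T.
  have h1 := sq_le_tr y a; have h2 := sq_le_tr w b.
  have h3 : `|y a 0| * `|w b 0| <= y a 0 ^+ 2 + w b 0 ^+ 2.
    rewrite -(real_normK (num_real (y a 0))) -(real_normK (num_real (w b 0))).
    have := normr_ge0 (y a 0); have := normr_ge0 (w b 0).
    set u := `|y a 0|; set v := `|w b 0|; move=> v0 u0.
    nra.
  rewrite (le_trans h3) // /T; exact: lerD.
rewrite !normrM mulrAC.
have : `|(Eop p V i) a b| <= \sum_j `|V j a b|.
  rewrite /Eop summxE (le_trans (ler_norm_sum _ _ _)) //; apply: ler_sum => j _.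
  rewrite mxE normrM ger0_norm ?p_ge0 //.
  have pj1 : p i j <= 1.
    rewrite -(p_sum1 i) (bigD1 j) //= lerDl; apply: sumr_ge0 => l _; exact: p_ge0.
  by rewrite ler_piMl.
move=> hE.
by rewrite mulrC; apply: ler_pM => //; rewrite mulr_ge0.
Qed.


Lemma tr_Mom_S M t i (y : 'cV[R]_d) :
  \tr (Mom p M t.+1 i y) = \sum_j p i j * \tr (Mom p M t j (M j *m y)).
Proof. rewrite /= raddf_sum; apply: eq_bigr => j _. exact: mxtraceZ. Qed.

Lemma old_bound M (V : 'I_N -> 'M[R]_d) t i (y w : 'cV[R]_d) :
  `|bf y (Eop p (iter t (Lop p M) V) i) w| <=
    bndc V * (\tr (Mom p M t i y) + \tr (Mom p M t i w)).
Proof.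
elim: t i y w => [|t IH] i y w; first exact: base_old.
rewrite iterS bfEL !tr_Mom_S -big_split /= mulr_sumr.
rewrite (le_trans (ler_norm_sum _ _ _)) //; apply: ler_sum => j _.
rewrite normrM ger0_norm ?p_ge0 // -mulrDr mulrCA.
by apply: ler_wpM2l; [exact: p_ge0 | exact: IH].
Qed.

Lemma Mom_S_entry M t i (y : 'cV[R]_d) a b :
  Mom p M t.+1 i y a b = \sum_j p i j * Mom p M t j (M j *m y) a b.
Proof. by rewrite /= summxE; apply: eq_bigr => j _; rewrite mxE. Qed.

Lemma new_bound (M : 'I_N -> 'M[R]_d) (Q : 'I_N -> 'M[R]_d) (C : R) :
  (forall i (y : 'cV[R]_d) a b, `|y a 0 * y b 0| <= C * bf y (Eop p Q i) y) ->
  forall t i (y : 'cV[R]_d) a b, `|Mom p M t i y a b| <= C * bf y (Eop p (iter t (Lop p M) Q) i) y.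
Proof.
move=> H0; elim=> [|t IH] i y a b.
  by rewrite /= mxE big_ord1 mxE; exact: H0.
rewrite Mom_S_entry iterS bfEL mulr_sumr.
rewrite (le_trans (ler_norm_sum _ _ _)) //; apply: ler_sum => j _.
rewrite normrM ger0_norm ?p_ge0 // mulrCA.
by apply: ler_wpM2l; [exact: p_ge0 | exact: IH].
Qed.

End Bounds.
Section PD.
Variable R : realType.
Variable n : nat.
Implicit Types (X : 'M[R]_n) (x y z w : 'cV[R]_n).

Lemma bfDl X x y z : bf (x + y) X z = bf x X z + bf y X z.
Proof. exact: dotDl. Qed.
Lemma bfDr X x y z : bf z X (x + y) = bf z X x + bf z X y.
Proof. by rewrite /bf mulmxDr dotDr. Qed.
Lemma bfZl X a x z : bf (a *: x) X z = a * bf x X z.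
Proof. exact: dotZl. Qed.
Lemma bfZr X a x z : bf z X (a *: x) = a * bf z X x.
Proof. by rewrite /bf -scalemxAr dotZr. Qed.
Lemma bfNl X x z : bf (- x) X z = - bf x X z.
Proof. exact: dotNl. Qed.
Lemma bfNr X x z : bf z X (- x) = - bf z X x.
Proof. by rewrite -scaleN1r bfZr mulN1r. Qed.
Lemma bf0r X x : bf x X 0 = 0.
Proof. by rewrite -(scale0r 0) bfZr mul0r. Qed.

Lemma posdef_bf X : posdef X -> forall x, x != 0 -> 0 < bf x X x.
Proof. by case=> _ H x /H; rewrite /bf /dot mulmxA. Qed.

Lemma posdef_unit X : (forall x, x != 0 -> 0 < bf x X x) -> X \in unitmx.
Proof.
move=> H; rewrite unitmxE unitfE; apply/negP => /det0P [v v0 vX].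
have : v^T != 0 by apply: contra v0 => /eqP /(congr1 trmx); rewrite trmxK trmx0 => ->.
move/H; rewrite /bf /dot trmxK mulmxA vX mul0mx mxE ltxx //.
Qed.

Lemma CS X : X^T = X -> (forall x, 0 <= bf x X x) -> (forall x, x != 0 -> 0 < bf x X x) ->
  forall w y, bf w X y ^+ 2 <= bf w X w * bf y X y.
Proof.
move=> sX psd pd w y.
set qw := bf w X w; set qy := bf y X y; set b := bf w X y.
have hyw : bf y X w = b by rewrite /b bf_sym.
have := psd (qy *: w - b *: y).
rewrite bfDl !bfDr !bfZl !bfNl !bfNr !bfZr ?bfZl -/qw -/qy hyw -/b.
have qy0 : 0 <= qy := psd y.
have qw0 : 0 <= qw := psd w.
rewrite le_eqVlt in qy0; case/orP: qy0 => [/eqP qy0|qy0].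
  move=> _; case: (eqVneq y 0) => [y0|/pd]; last by rewrite -/qy qy0 ltxx.
  by rewrite /b -qy0 /qy y0 bf0r expr0n /= mulr0.
move=> h.
nra.
Qed.


Lemma dot_delta (y : 'cV[R]_n) a : dot (delta_mx a 0) y = y a 0.
Proof.
rewrite dotE (bigD1 a) //= big1 => [|c /negbTE ca]; last by rewrite mxE ca mul0r.
by rewrite addr0 mxE !eqxx mul1r.
Qed.

Lemma entry_bound X : X^T = X -> (forall x, 0 <= bf x X x) -> (forall x, x != 0 -> 0 < bf x X x) ->
  exists C, 0 <= C /\ forall y a, y a 0 ^+ 2 <= C * bf y X y.
Proof.
move=> sX psd pd.
have uX := posdef_unit pd.
pose wa a := (invmx X)^T *m (delta_mx a 0 : 'cV[R]_n).
exists (\sum_a bf (wa a) X (wa a)); split.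
  by apply: sumr_ge0 => a _; exact: psd.
move=> y a.
have -> : y a 0 = bf (wa a) X y.
  by rewrite /bf /wa -dot_tr mulmxA mulVmx // mul1mx dot_delta.
rewrite (le_trans (CS sX psd pd _ _)) //; apply: ler_wpM2r; first exact: psd.
by rewrite (bigD1 a) //= lerDl; apply: sumr_ge0 => b _; exact: psd.
Qed.

End PD.
Lemma key (R : realType) (k d : nat) (Rm : 'M[R]_k) (E : 'M[R]_d) (Bm : 'M[R]_(d, k))
   (u dl : 'cV[R]_k) (a : 'cV[R]_d) (c : R) :
  Rm^T = Rm -> E^T = E ->
  (Rm + Bm^T *m E *m Bm) *m dl = (Rm + Bm^T *m E *m Bm) *m u - Bm^T *m (E *m a) ->
  0 <= bf dl (Rm + Bm^T *m E *m Bm) dl -> 0 <= c -> c <= 2 ->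
  bf (u - c *: dl) Rm (u - c *: dl) + bf (a - Bm *m (u - c *: dl)) E (a - Bm *m (u - c *: dl))
  <= bf u Rm u + bf (a - Bm *m u) E (a - Bm *m u).
Proof.
move=> sR sE hG X0 c0 c2.
set G := Rm + _ in hG X0.
set v := a - Bm *m u; set be := Bm *m dl.
have ev : a - Bm *m (u - c *: dl) = v + c *: be.
  by rewrite mulmxBr scalemxAr opprB addrA addrAC.
have e2 : bf dl G dl = bf dl Rm dl + bf be E be by rewrite /G bfD bf_mul.
have e1 : bf dl G dl = bf dl Rm u - bf be E v.
  rewrite [LHS]/bf hG dotBr -/(bf dl G u) /G bfD bf_mul dot_tr trmxK -/(bf be E a).
  by rewrite /v bfDr bfNr -/be; lra.
rewrite ev !(bfDl, bfDr, bfNl, bfNr, bfZl, bfZr).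
have s1 : bf u Rm dl = bf dl Rm u by apply: bf_sym.
have s2 : bf a E be = bf be E a by apply: bf_sym.
have s3 : bf (Bm *m u) E be = bf be E (Bm *m u) by apply: bf_sym.
rewrite s1 s2 s3; move: e1; rewrite /v bfDr bfNr => e1.
have h : 0 <= c * (2 - c) * bf dl G dl by rewrite mulr_ge0 // mulr_ge0 // subr_ge0.
nra.
Qed.
Section Old.
Variable R : realType.
Variables (N d k : nat).
Variable p : 'M[R]_N.
Hypothesis hp : stochastic p.
Variable M : 'I_N -> 'M[R]_d.
Hypothesis hM : forall (pi : 'I_N -> R) (x0 : 'cV[R]_d), prob_vector pi ->
    forall a b : 'I_d,
      (fun t : nat => second_moment pi p M x0 t a b) @ \oo --> (0 : R).

Lemma tr_Mom_cvg i x : (fun n => \tr (Mom p M n i (M i *m x))) @ \oo --> 0.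
Proof.
pose pi := fun j : 'I_N => ((j == i)%:R : R).
have hpi : prob_vector pi.
  split; first by move=> j; rewrite /pi; case: (j == i).
  rewrite (bigD1 i) //= big1 => [|j /negbTE ji]; last by rewrite /pi ji.
  by rewrite /pi eqxx addr0.
have E n : Mom p M n i (M i *m x) = second_moment pi p M x n.+1.
  rewrite smE (bigD1 i) //= big1 => [|j /negbTE ji]; last by rewrite /pi ji scale0r.
  by rewrite /pi eqxx scale1r addr0.
have -> : (fun n => \tr (Mom p M n i (M i *m x))) =
    (fun n => \sum_a second_moment pi p M x n.+1 a a).
  by apply/funext => n; rewrite E.
apply: cvg_sum0 => a.
have := hM x hpi a a; rewrite -cvg_shiftS; exact.
Qed.

Lemma old_lim (V : 'I_N -> 'M[R]_d) i x z :
  (fun n => bf (M i *m x) (Eop p (iter n (Lop p M) V) i) (M i *m z)) @ \oo --> 0.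
Proof.
pose g := fun n => bndc V * (\tr (Mom p M n i (M i *m x)) + \tr (Mom p M n i (M i *m z))).
have H1 : forall n, `|bf (M i *m x) (Eop p (iter n (Lop p M) V) i) (M i *m z)| <= g n.
  by move=> n; exact: old_bound.
have H2 : g @ \oo --> 0.
  apply: cvg_scale0.
  have := cvgD (tr_Mom_cvg i x) (tr_Mom_cvg i z); rewrite addr0; exact.
exact: (squeeze0 H1 H2).
Qed.

End Old.
Lemma psd_of_posdef (R : realType) n (X : 'M[R]_n) : posdef X -> forall x, 0 <= bf x X x.
Proof.
move=> hX x; case: (eqVneq x 0) => [->|/(posdef_bf hX) /ltW //].
by rewrite /bf dot0l.
Qed.

Section Final.
Variable R : realType.
Variables (N d k : nat).
Variables (p : 'M[R]_N) (A : 'I_N -> 'M[R]_d) (B : 'I_N -> 'M[R]_(d, k))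
  (Q : 'I_N -> 'M[R]_d) (Rc : 'I_N -> 'M[R]_k)
  (K : 'I_N -> 'M[R]_(k, d)) (P : 'I_N -> 'M[R]_d).
Hypothesis hp : stochastic p.
Hypothesis hQ : forall i, posdef (Q i).
Hypothesis hR : forall i, posdef (Rc i).
Hypothesis hK : ms_stabilizing p A B K.
Hypothesis hPK : is_PK p A B Q Rc K P.

Let M := closed_loop A B K.

Lemma PK_bf i x : bf x (P i) x =
  bf x (Q i) x + bf (K i *m x) (Rc i) (K i *m x) + bf x (Lop p M P i) x.
Proof. by rewrite {1}hPK !bfD bf_mul. Qed.

Lemma P_ge_Q i x : bf x (Q i) x <= bf x (P i) x.
Proof.
have base j y : bf y (Q j) y + bf y (Lop p M P j) y <= bf y (P j) y.
  by rewrite PK_bf -addrA lerD2l lerDr; exact: psd_of_posdef.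
have H n : forall j y, bf y (Q j) y + bf y (iter n.+1 (Lop p M) P j) y <= bf y (P j) y.
  elim: n => [|n IH] j y; first exact: base.
  apply: le_trans (base j y); rewrite lerD2l iterS !bfL' ler_sum // => l _.
  apply: ler_wpM2l; first exact: p_ge0.
  have := IH l (M j *m y); have := psd_of_posdef (hQ l) (M j *m y); lra.
have hc : (fun n => bf x (Q i) x + bf x (iter n.+1 (Lop p M) P i) x) @ \oo --> bf x (Q i) x.
  rewrite -[X in _ --> X]addr0; apply: cvgD; first exact: cvg_cst.
  have := old_lim hp hK P i x x; apply: cvg_trans; apply: near_eq_cvg; near=> n.
  by rewrite iterS bfL.
apply: (ler_cvg_to hc (cvg_cst (bf x (P i) x))); near=> n; exact: H.
Unshelve. all: by end_near.
Qed.


Lemma Eop_tr (V : 'I_N -> 'M[R]_d) i : (Eop p V i)^T = Eop p (fun j => (V j)^T) i.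
Proof.
apply/matrixP => a b; rewrite !mxE !summxE; apply: eq_bigr => l _; by rewrite !mxE.
Qed.

Lemma Eop_eq (V W : 'I_N -> 'M[R]_d) i : (forall j, V j = W j) -> Eop p V i = Eop p W i.
Proof. by move=> h; apply: eq_bigr => j _; rewrite h. Qed.

Lemma P_sym i : (P i)^T = P i.
Proof.
pose D := fun j => P j - (P j)^T.
have sQ j : (Q j)^T = Q j by case: (hQ j).
have sR j : (Rc j)^T = Rc j by case: (hR j).
have hPt j : (P j)^T = Q j + (K j)^T *m Rc j *m K j + Lop p M (fun l => (P l)^T) j.
  rewrite {1}hPK /Lop /M; move: (closed_loop A B K j) => CL.
  by rewrite !linearD /= !trmx_mul !trmxK sQ sR Eop_tr !mulmxA.
have hD j : Lop p M D j = D j.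
  have -> : Lop p M D j = Lop p M P j - Lop p M (fun l => (P l)^T) j.
    rewrite /Lop -mulmxBl -mulmxBr; congr (_ *m _ *m _).
    by rewrite /Eop -sumrB; apply: eq_bigr => l _; rewrite scalerBr.
  have -> : D j = (Q j + (K j)^T *m Rc j *m K j + Lop p M P j) -
     (Q j + (K j)^T *m Rc j *m K j + Lop p M (fun l => (P l)^T) j).
    by rewrite /D; congr (_ - _); [exact: hPK | exact: hPt].
  by rewrite opprD addrACA subrr add0r.
have hDn n j : iter n (Lop p M) D j = D j.
  elim: n j => [|n IH] j //=.
  by rewrite -[RHS]hD /Lop (Eop_eq _ IH).
have h0 x z : bf x (D i) z = 0.
  apply: cst_cvg0.
  have := old_lim hp hK D i x z; apply: cvg_trans; apply: near_eq_cvg; near=> n.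
  by rewrite -bfL -iterS hDn.
apply/eqP; rewrite eq_sym -subr_eq0; apply/eqP/matrixP => a b.
by rewrite -bf_entry h0 mxE.
Unshelve. all: by end_near.
Qed.


Lemma P_psd j y : 0 <= bf y (P j) y.
Proof. exact: le_trans (psd_of_posdef (hQ j) y) (P_ge_Q j y). Qed.

Variable eta : R.
Hypothesis eta0 : 0 < eta.
Hypothesis eta1 : eta <= 1 / 2.

Let M' := closed_loop A B (Kupdate eta p A B Rc K P).

Lemma new_ineq i x : bf x (Q i) x + bf x (Lop p M' P i) x <= bf x (P i) x.
Proof.
set E := Eop p P i.
have sE : E^T = E by rewrite /E Eop_tr; apply: Eop_eq => j; exact: P_sym.
have psdE v : 0 <= bf v E v.
  by rewrite /E bfE; apply: sumr_ge0 => j _; apply: mulr_ge0; [exact: p_ge0 | exact: P_psd].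
set G := Rc i + (B i)^T *m E *m B i.
have pdG v : v != 0 -> 0 < bf v G v.
  move=> v0; rewrite /G bfD bf_mul.
  have := posdef_bf (hR i) v0; have := psdE (B i *m v); lra.
have uG := posdef_unit pdG.
set u := K i *m x; set a := A i *m x.
set dl := invmx G *m (LK p A B Rc K P i *m x).
set c := 2 * eta.
have eK : Kupdate eta p A B Rc K P i *m x = u - c *: dl.
  by rewrite /Kupdate mulmxBl -scalemxAl /dl mulmxA.
have eM' : M' i *m x = a - B i *m (u - c *: dl).
  by rewrite /M' /closed_loop mulmxBl -mulmxA eK.
have eM : M i *m x = a - B i *m u.
  by rewrite /M /closed_loop mulmxBl -mulmxA.
have eL : LK p A B Rc K P i *m x = G *m u - (B i)^T *m (E *m a).
  by rewrite /LK mulmxBl -/E -/G -!mulmxA.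
have hG : G *m dl = G *m u - (B i)^T *m (E *m a).
  by rewrite /dl [LHS]mulmxA mulmxV // mul1mx eL.
have X0 : 0 <= bf dl G dl.
  case: (eqVneq dl 0) => [->|/pdG /ltW //]; by rewrite bf0r.
have sRi : (Rc i)^T = Rc i by case: (hR i).
have c0 : 0 <= c by rewrite /c mulr_ge0 // ltW.
have c2 : c <= 2.
  rewrite /c -[leRHS]mulr1 ler_wpM2l //.
  by apply: le_trans eta1 _; rewrite ler_pdivrMr // mul1r ler1n.
have := key sRi sE hG X0 c0 c2.
rewrite PK_bf !bfL -/E eM eM' -/u.
have : 0 <= bf (u - c *: dl) (Rc i) (u - c *: dl) by apply: psd_of_posdef.
lra.
Qed.


Lemma iter_psd (V : 'I_N -> 'M[R]_d) : (forall j y, 0 <= bf y (V j) y) ->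
  forall n j y, 0 <= bf y (iter n (Lop p M') V j) y.
Proof.
move=> hV; elim=> [|n IH] j y //=.
rewrite bfL'; apply: sumr_ge0 => l _; apply: mulr_ge0; [exact: p_ge0 | exact: IH].
Qed.

Lemma partial_bound n i x :
  \sum_(0 <= t < n) bf x (iter t (Lop p M') Q i) x + bf x (iter n (Lop p M') P i) x
  <= bf x (P i) x.
Proof.
elim: n i x => [|n IH] i x; first by rewrite big_geq // add0r.
rewrite big_nat_recl //= [bf x (Lop p M' (iter n _ P) i) x]bfL'.
have -> : \sum_(0 <= t < n) bf x (Lop p M' (iter t (Lop p M') Q) i) x =
   \sum_j p i j * \sum_(0 <= t < n) bf (M' i *m x) (iter t (Lop p M') Q j) (M' i *m x).
  rewrite (eq_bigr (fun t => \sum_j p i j * bf (M' i *m x) (iter t (Lop p M') Q j) (M' i *m x))).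
    by rewrite exchange_big /=; apply: eq_bigr => j _; rewrite mulr_sumr.
  by move=> t _; rewrite bfL'.
rewrite -addrA -big_split /=.
have h2 : \sum_j p i j * (\sum_(0 <= t < n) bf (M' i *m x) (iter t (Lop p M') Q j) (M' i *m x))
   + \sum_j p i j * bf (M' i *m x) (iter n (Lop p M') P j) (M' i *m x)
   <= bf x (Lop p M' P i) x.
  rewrite bfL' -big_split /=; apply: ler_sum => j _; rewrite -mulrDr.
  apply: ler_wpM2l; [exact: p_ge0 | exact: IH].
have h3 := new_ineq i x.
rewrite -big_split /= in h2.
lra.
Qed.

Lemma new_cvg i x : (fun t => bf x (iter t (Lop p M') Q i) x) @ \oo --> 0.
Proof.
apply: (@summable_cvg0 _ _ (bf x (P i) x)).
  by move=> n; apply: iter_psd => j y; exact: psd_of_posdef.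
move=> n.
have := partial_bound n i x; rewrite big_mkord; have := iter_psd P_psd n i x; lra.
Qed.


Lemma new_stab : ms_stabilizing p A B (Kupdate eta p A B Rc K P).
Proof.
move=> pi x0 hpi a b.
have hex : forall j : 'I_N, exists C : R, 0 <= C /\
    forall (y : 'cV[R]_d) a, y a 0 ^+ 2 <= C * bf y (Q j) y.
  move=> j; case: (hQ j) => sQ _.
  exact: entry_bound sQ (psd_of_posdef (hQ j)) (posdef_bf (hQ j)).
have [Cf hCf] := fin_all_exists hex.
pose C2 := 2 * \sum_j Cf j.
have hC : forall i (y : 'cV[R]_d) a b, `|y a 0 * y b 0| <= C2 * bf y (Eop p Q i) y.
  move=> i y a' b'.
  have hj j : `|y a' 0 * y b' 0| <= C2 * bf y (Q j) y.
    have [C0 hj] := hCf j.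
    have h1 := hj y a'; have h2 := hj y b'.
    have q0 := psd_of_posdef (hQ j) y.
    have hCj : Cf j <= \sum_l Cf l.
      by rewrite (bigD1 j) //= lerDl sumr_ge0 // => l _; case: (hCf l).
    have h3 : `|y a' 0 * y b' 0| <= y a' 0 ^+ 2 + y b' 0 ^+ 2.
      rewrite normrM -(real_normK (num_real (y a' 0))) -(real_normK (num_real (y b' 0))).
      have := normr_ge0 (y a' 0); have := normr_ge0 (y b' 0).
      set s1 := `|y a' 0|; set s2 := `|y b' 0|; move=> s20 s10; nra.
    have h4 : Cf j * bf y (Q j) y <= (\sum_l Cf l) * bf y (Q j) y by apply: ler_wpM2r.
    rewrite /C2; nra.
  rewrite bfE -[X in X <= _]mul1r -(p_sum1 hp i) mulr_suml mulr_sumr.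
  apply: ler_sum => j _; rewrite mulrCA; apply: ler_wpM2l; [exact: p_ge0 | exact: hj].
have hB := new_bound hp M' hC.
have E t : second_moment pi p M' x0 t.+1 a b = \sum_i pi i * Mom p M' t i (M' i *m x0) a b.
  by rewrite smE summxE; apply: eq_bigr => i _; rewrite mxE.
have pi0 i : 0 <= pi i by case: hpi.
pose g := fun t => \sum_i pi i * (C2 * bf x0 (iter t.+1 (Lop p M') Q i) x0).
have H1 t : `|second_moment pi p M' x0 t.+1 a b| <= g t.
  rewrite E (le_trans (ler_norm_sum _ _ _)) // ler_sum // => i _.
  rewrite normrM ger0_norm // iterS bfL; apply: ler_wpM2l => //; exact: hB.
have H2 : g @ \oo --> 0.
  apply: cvg_sum0 => i; apply: cvg_scale0; apply: cvg_scale0.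
  have := new_cvg i x0; rewrite -cvg_shiftS; exact.
rewrite -cvg_shiftS; exact: (squeeze0 H1 H2).
Qed.

End Final.

Theorem lemma6 (R : realType) (N d k : nat) (hN : (0 < N)%N)
  (p : 'M[R]_N) (A : 'I_N -> 'M[R]_d) (B : 'I_N -> 'M[R]_(d, k))
  (Q : 'I_N -> 'M[R]_d) (Rc : 'I_N -> 'M[R]_k)
  (K : 'I_N -> 'M[R]_(k, d)) (P : 'I_N -> 'M[R]_d) (eta : R) :
  stochastic p ->
  (forall i, posdef (Q i)) -> (forall i, posdef (Rc i)) ->
  ms_stabilizing p A B K ->
  is_PK p A B Q Rc K P ->
  0 < eta -> eta <= 1 / 2 ->
  ms_stabilizing p A B (Kupdate eta p A B Rc K P).
Proof.
move=> hp hQ hR hK hPK eta0 eta1.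
exact: (new_stab hp hQ hR hK hPK eta0 eta1).
Qed.
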